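(* Let $([n],\mathcal{I})$ be a downward-closed set system on the set of bidders $[n]$ that is not a matroid. Then MyerOPT is not RMMB: there exist distributions $F_1,\dots,F_n$, a partition $[n]=G\cup R$ with $G\neq\emptyset$, and fixed red bids $b_i\in V_i$ ($i\in R$) such that $$\mathbb{E}_{\vec b_G\sim\prod_{i\in G}F_i}\big[\mathrm{Rev}(\mathrm{MyerOPT}_{[n]}(\vec b_G,\vec b_R))\big]\;<\;\mathbb{E}_{\vec b_G\sim\prod_{i\in G}F_i}\big[\mathrm{Rev}(\mathrm{MyerOPT}_G(\vec b_G))\big].$$
   Context: Single-parameter environment: bidders $[n]$; a feasibility constraint $\mathcal{I}\subseteq 2^{[n]}$ with $\emptyset\in\mathcal{I}$ that is downward-closed (if $B\in\mathcal{I}$ and $A\subseteq B$ then $A\in\mathcal{I}$). A matroid is such a system that also satisfies the exchange axiom: if $A,B\in\mathcal{I}$ and $|A|>|B|$ then there is $x\in A\setminus B$ with $B\cup\{x\}\in\mathcal{I}$. Each bidder $i$ has a specified value distribution $F_i$ on $\mathbb{R}_{\ge0}$ with support $V_i$. The (ironed) virtual value function $\phi_i$ of $F_i$ is defined in quantile space: let $v_i(q)=\min\{v: F_i(v)\ge 1-q\}$ for $q\in[0,1]$, $R_i(q)=q\,v_i(q)$, $\overline{R_i}$ the least concave majorant of $R_i$ on $[0,1]$, and $\phi_i(v_i(q))=\overline{R_i}'(q)$ (for a regular distribution with density $f_i$ this equals $z-\frac{1-F_i(z)}{f_i(z)}$ at $z=v_i(q)$; for a point mass at $c$ it is constantly $c$).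 For $S\subseteq[n]$ and bids $b_i\in V_i$ ($i\in S$), the mechanism $\mathrm{MyerOPT}_S$ works as follows: discard bidders $i\in S$ with $\phi_i(b_i)<0$; among the sets $T\in\mathcal{I}$ with $T$ contained in the remaining bidders, select a set of winners maximizing $\sum_{i\in T}\phi_i(b_i)$ (ties broken by a fixed deterministic rule); each winner $i$ pays its critical bid, i.e. the infimum of those $z\in V_i$ such that $i$ would still be a winner if it bid $z$ with all other bids unchanged; losers pay $0$. $\mathrm{Rev}$ denotes the sum of the payments. $\mathrm{MyerOPT}$ (or $\mathrm{MyerOPT}_{[n]}$) is this mechanism run on all bidders with all specified distributions. The mechanism is RMMB (Revenue Monotone under Misspecified Bidders) for the feasibility constraint if for all distributions, all partitions $[n]=G\cup R$ with $G\ne\emptyset$ (''green'' and ''red'' bidders), and all fixed red bids $b_i\in V_i$ ($i\in R$), the expected revenue (over $\vec b_G\sim\prod_{i\in G}F_i$) of $\mathrm{MyerOPT}_{[n]}$ on $(\vec b_G,\vec b_R)$ is at least the expected revenue of $\mathrm{MyerOPT}_G$ on $\vec b_G$. *)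

(* Defs.v *)
From HB Require Import structures.
From mathcomp Require Import all_boot all_order all_algebra.
From mathcomp Require Import boolp classical_sets reals topology normedtype derive.
Set Implicit Arguments. Unset Strict Implicit. Unset Printing Implicit Defensive.
Import Order.TTheory GRing.Theory Num.Theory.
Import numFieldNormedType.Exports.
Local Open Scope ring_scope.


Definition downward_closed (n : nat) (I : {set {set 'I_n}}) : Prop :=
  forall A B : {set 'I_n}, B \in I -> A \subset B -> A \in I.

Definition exchange_axiom (n : nat) (I : {set {set 'I_n}}) : Prop :=
  forall A B : {set 'I_n}, A \in I -> B \in I -> (#|B| < #|A|)%N ->
    exists x, x \in A :\: B /\ ([set x] :|: B) \in I.

Definition is_matroid (n : nat) (I : {set {set 'I_n}}) : Prop :=
  finset.set0 \in I /\ downward_closed I /\ exchange_axiom I.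

(* A tie-breaking rule: a fixed deterministic choice of one set among the
   (nonempty) set of optimal feasible sets. *)
Definition tie_breaking_rule (n : nat) (tb : {set {set 'I_n}} -> {set 'I_n}) : Prop :=
  forall A : {set {set 'I_n}}, A != finset.set0 -> tb A \in A.

Record fdist (R : realType) := FDist {
  fd_supp : seq R;
  fd_pmf : R -> R;
  fd_uniq : uniq fd_supp;
  fd_nonneg : all (fun x => 0 <= x) fd_supp;
  fd_pos : all (fun x => 0 < fd_pmf x) fd_supp;
  fd_sum1 : \sum_(x <- fd_supp) fd_pmf x == 1 }.

Section VirtualValues.
Variable R : realType.
Variable D : fdist R.

Definition cdf (v : R) : R := \sum_(x <- fd_supp D | x <= v) fd_pmf D x.

Definition quantile_value (q : R) : R :=
  inf [set v : R | 0 <= v /\ 1 - q <= cdf v]%classic.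

Definition revenue_curve (q : R) : R := q * quantile_value q.

Definition concave01 (g : R -> R) : Prop :=
  forall x y t : R, 0 <= x <= 1 -> 0 <= y <= 1 -> 0 <= t <= 1 ->
    t * g x + (1 - t) * g y <= g (t * x + (1 - t) * y).

Definition ironed_revenue (q : R) : R :=
  inf [set y : R | exists g : R -> R, concave01 g /\
         (forall q', 0 <= q' <= 1 -> revenue_curve q' <= g q') /\ y = g q]%classic.

(* (ironed) virtual value phi(z) = ironed_revenue'(q) for a quantile q with
   v(q) = z; for an atom z, the quantiles q with v(q) = z form the interval
   [1 - F(z), 1 - F(z) + Pr[z]), and we take its midpoint (an interior point,
   where the least concave majorant is differentiable). *)
Definition virtual_value (z : R) : R :=
  derive1 ironed_revenue (1 - cdf z + fd_pmf D z / 2).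

End VirtualValues.

Section Myerson.
Variable R : realType.
Variable n : nat.
Variable D : 'I_n -> fdist R.
Variable I : {set {set 'I_n}}.
Variable tb : {set {set 'I_n}} -> {set 'I_n}.

Definition phi (i : 'I_n) (x : R) : R := virtual_value (D i) x.

Definition upd (b : 'I_n -> R) (i : 'I_n) (z : R) : 'I_n -> R :=
  fun j => if j == i then z else b j.

Definition remaining (S : {set 'I_n}) (b : 'I_n -> R) : {set 'I_n} :=
  [set i in S | 0 <= phi i (b i)].

Definition vv_weight (b : 'I_n -> R) (T : {set 'I_n}) : R :=
  \sum_(i in T) phi i (b i).

Definition candidates (S : {set 'I_n}) (b : 'I_n -> R) : {set {set 'I_n}} :=
  [set T : {set 'I_n} | (T \in I) && (T \subset remaining S b)].

Definition optimal_sets (S : {set 'I_n}) (b : 'I_n -> R) : {set {set 'I_n}} :=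
  [set T in candidates S b |
     [forall T' in candidates S b, vv_weight b T' <= vv_weight b T]].

Definition winners (S : {set 'I_n}) (b : 'I_n -> R) : {set 'I_n} :=
  tb (optimal_sets S b).

Definition critical_bid (S : {set 'I_n}) (b : 'I_n -> R) (i : 'I_n) : R :=
  inf [set z : R | z \in fd_supp (D i) /\ i \in winners S (upd b i z)]%classic.

Definition Rev (S : {set 'I_n}) (b : 'I_n -> R) : R :=
  \sum_(i in winners S b) critical_bid S b i.

(* expectation of h over the bids of the bidders in l, drawn independently
   from their distributions; the other coordinates are taken from b *)
Fixpoint expect (l : seq 'I_n) (h : ('I_n -> R) -> R) (b : 'I_n -> R) : R :=
  match l with
  | [::] => h b
  | i :: l' => \sum_(x <- fd_supp (D i)) fd_pmf (D i) x * expect l' h (upd b i x)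
  end.

End Myerson.

(* Main.v *)
Require Import Defs.
From HB Require Import structures.
From mathcomp Require Import all_boot all_order all_algebra.
From mathcomp Require Import boolp classical_sets reals topology normedtype derive.
From mathcomp Require Import ring lra.
From Stdlib Require Classical_Prop.
Import Order.TTheory GRing.Theory Num.Theory.
Import numFieldNormedType.Exports.
Local Open Scope ring_scope.

Section Dists.
Variable R : realType.

Lemma inf_min (E : set R) m : E m -> (forall x, E x -> m <= x) -> inf E = m.
Proof.
move=> Em lb; apply/le_anti/andP; split.
  by apply: ge_inf => //; exists m.
by apply: lb_le_inf => //; exists m.
Qed.

Lemma inf_le_elt (E : set R) m x : (forall y, E y -> m <= y) -> E x -> inf E <= x.
Proof. by move=> lb Ex; apply: ge_inf => //; exists m. Qed.

Lemma ir_eq (D : fdist R) q (h : R -> R) : concave01 h ->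
  (forall q', 0 <= q' <= 1 -> revenue_curve D q' <= h q') ->
  (forall g, concave01 g -> (forall q', 0 <= q' <= 1 -> revenue_curve D q' <= g q') ->
     h q <= g q) ->
  ironed_revenue D q = h q.
Proof.
move=> hc hm hlb; apply: inf_min; first by exists h.
by move=> y [g [gc [gm ->]]]; exact: hlb.
Qed.

Lemma cdf_ge0 (D : fdist R) v : 0 <= cdf D v.
Proof.
rewrite /cdf big_seq_cond sumr_ge0 // => x /andP[xs _].
by have /allP/(_ x xs) := fd_pos D => /ltW.
Qed.

Lemma qv1_le0 (D : fdist R) : quantile_value D 1 <= 0.
Proof.
apply: (@inf_le_elt _ 0) => [y [] //|]; split => //.
by rewrite subrr cdf_ge0.
Qed.

Lemma derive1_affine (f : R -> R) (x0 l u s t : R) :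
  l < x0 < u -> (forall q, l < q < u -> f q = s*q + t) -> derive1 f x0 = s.
Proof.
move=> hx hf.
rewrite derive1E (@near_eq_derive _ _ _ f (fun q => s * q + t)); last first.
  have := @near_in_itvoo R l u x0.
  rewrite in_itv /= hx => /(_ isT) H.
  near=> q. have : q \in `]l, u[ by near: q.
  by rewrite in_itv /= => /hf.
rewrite deriveD //= ?deriveM //= derive_id !derive_cst scaler0 !addr0.
by rewrite -[RHS]mulr1.
Unshelve. all: by end_near. Qed.

Section PM.
Variables (c : R) (hc : 0 <= c).
Lemma pm_uniq : uniq [:: c]. Proof. by []. Qed.
Lemma pm_nonneg : all (fun x => 0 <= x) [:: c]. Proof. by rewrite /= hc. Qed.
Lemma pm_pos : all (fun x => 0 < (fun _ : R => 1 : R) x) [:: c]. Proof. by rewrite /= ltr01. Qed.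
Lemma pm_sum : \sum_(x <- [:: c]) (fun _ : R => 1 : R) x == 1. Proof. by rewrite big_seq1. Qed.
Definition pm : fdist R := FDist pm_uniq pm_nonneg pm_pos pm_sum.

Lemma cdf_pm v : cdf pm v = if c <= v then 1 else 0.
Proof. by rewrite /cdf /= big_cons big_nil; case: ifP; rewrite ?addr0. Qed.

Lemma qv_pm q : 0 <= q < 1 -> quantile_value pm q = c.
Proof.
case/andP=> q0 q1; apply: inf_min.
  by split => //; rewrite cdf_pm lexx lerBlDr lerDl.
move=> v [v0]; rewrite cdf_pm; case: ifP => // _; lra.
Qed.

Lemma vv_pm : virtual_value pm c = c.
Proof.
rewrite /virtual_value cdf_pm lexx /= subrr add0r.
have h12 : (0 < (1/2 : R)) && ((1/2 : R) < 1) by apply/andP; split; lra.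

apply: (@derive1_affine _ _ 0 1 c 0 h12).

move=> q /andP[q0 q1]; rewrite addr0.
apply: (@ir_eq _ _ (fun q => c * q)).
- by move=> x y t _ _ _; rewrite mulrDr !mulrA [c * t]mulrC [c * (1 - t)]mulrC.
- move=> q' /andP[q'0]; rewrite le_eqVlt => /orP[/eqP->|q'1].
    rewrite /revenue_curve mul1r mulr1; apply: le_trans (qv1_le0 _) hc.
  by rewrite /revenue_curve qv_pm ?q'0 // mulrC.
- move=> g _ gm; have := gm q; rewrite /revenue_curve qv_pm; last lra.
  rewrite mulrC; apply; lra.

Qed.
End PM.

Section Two.
Variables (a b p : R) (ha : 0 <= a) (hab : a < b) (hp0 : 0 < p) (hp1 : p < 1).
Ltac hy := have := ha; have := hab; have := hp0; have := hp1; move=> ? ? ? ?.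
Definition pmf2 (x : R) : R := if x == b then p else 1 - p.
Lemma two_uniq : uniq [:: a; b]. Proof. by rewrite /= inE andbT lt_eqF. Qed.
Lemma two_nonneg : all (fun x => 0 <= x) [:: a; b].
Proof. by rewrite /= ha (le_trans ha (ltW hab)). Qed.
Lemma two_pos : all (fun x => 0 < pmf2 x) [:: a; b].
Proof. hy; rewrite /= /pmf2 (lt_eqF hab) eqxx hp0 /=; apply/andP; split => //; lra. Qed.
Lemma two_sum : \sum_(x <- [:: a; b]) pmf2 x == 1.
Proof. by rewrite big_cons big_seq1 /pmf2 (lt_eqF hab) eqxx subrK. Qed.
Definition two : fdist R := FDist two_uniq two_nonneg two_pos two_sum.

Lemma cdf_two v : cdf two v = (if a <= v then 1 - p else 0) + (if b <= v then p else 0).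
Proof.
rewrite /cdf /= !big_cons big_nil /pmf2 (lt_eqF hab) eqxx.
by case: ifP; case: ifP; rewrite ?addr0 ?add0r.
Qed.

Lemma qv_hi q : 0 <= q < p -> quantile_value two q = b.
Proof.
hy; case/andP=> q0 q1; apply: inf_min.
  split; first exact: (le_trans ha (ltW hab)).
  by rewrite cdf_two lexx (ltW hab) subrK; lra.
move=> v [v0]; rewrite cdf_two.
case: (leP b v) => // bv; case: ifP => _; lra.
Qed.

Lemma qv_lo q : p <= q < 1 -> quantile_value two q = a.
Proof.
hy; case/andP=> q0 q1; apply: inf_min.
  by split => //; rewrite cdf_two lexx (lt_geF hab) addr0; lra.
move=> v [v0]; rewrite cdf_two.
case: (leP a v) => // av; rewrite ifF; first lra.
by apply/negbTE; rewrite -ltNge (lt_trans av hab).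
Qed.

Definition s2 : R := (a - p * b) / (1 - p).
Definition L2 (q : R) : R := s2 * q + (p * b - s2 * p).
Definition h2 (q : R) : R := Order.min (b * q) (L2 q).

Lemma s2E : s2 * (1 - p) = a - p * b.
Proof. hy; rewrite /s2 mulfVK //; apply/eqP => h; lra. Qed.

Lemma s2_le_b : s2 <= b.
Proof. hy; have := s2E; have : 0 < 1 - p by lra. move=> h1 h2. nra. Qed.

Lemma s2_le_a : s2 <= a.
Proof. hy; have := s2E; have : 0 < 1 - p by lra. move=> h1 h2. nra. Qed.

Lemma F1 q : q <= p -> b * q <= L2 q.
Proof. hy; move=> qp; have := s2_le_b; rewrite /L2; nra. Qed.

Lemma F2 q : p <= q -> L2 q <= b * q.
Proof. hy; move=> qp; have := s2_le_b; rewrite /L2; nra. Qed.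


Lemma F3 q : q <= 1 -> a * q <= L2 q.
Proof.
hy; move=> q1; have := s2E; have : 0 < 1 - p by lra.
rewrite /L2 => h1 h2.
have e : (s2 * q + (p * b - s2 * p) - a * q) * (1 - p) = p * (1 - q) * (b - a).
  have -> : (s2 * q + (p * b - s2 * p) - a * q) * (1 - p) =
    (s2 * (1 - p)) * (q - p) + p * b * (1 - p) - a * q * (1 - p) by ring.
  rewrite h2; ring.
have : 0 <= p * (1 - q) * (b - a) by apply: mulr_ge0; [apply: mulr_ge0|]; lra.
rewrite -e => h3; nra.
Qed.

Lemma h2_concave : concave01 h2.
Proof.
move=> x y t _ _ /andP[t0 t1]; rewrite /h2 le_min.
have hx1 : Order.min (b * x) (L2 x) <= b * x by rewrite ge_min lexx.
have hx2 : Order.min (b * x) (L2 x) <= L2 x by rewrite ge_min lexx orbT.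
have hy1 : Order.min (b * y) (L2 y) <= b * y by rewrite ge_min lexx.
have hy2 : Order.min (b * y) (L2 y) <= L2 y by rewrite ge_min lexx orbT.
move: hx1 hx2 hy1 hy2; rewrite /L2.
move: (Order.min (b * x) _) (Order.min (b * y) _) => mx my hx1 hx2 hy1 hy2.
apply/andP; split; nra.
Qed.

Lemma h2_major q' : 0 <= q' <= 1 -> revenue_curve two q' <= h2 q'.
Proof.
hy; case/andP=> q0 q1; rewrite /revenue_curve /h2.
case: (ltP q' p) => qp.
  rewrite qv_hi ?q0 // min_l ?F1 ?(ltW qp) //; by rewrite mulrC.
move: q1; rewrite le_eqVlt => /orP[/eqP e|q1].
  rewrite e mul1r le_min; apply/andP; split.
    by apply: le_trans (qv1_le0 _) _; rewrite mulr1; lra.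
  apply: le_trans (qv1_le0 _) _.
  have h := @F3 1 (lexx _); rewrite mulr1 in h; lra.
rewrite qv_lo ?qp // le_min; apply/andP; split; first nra.
by rewrite mulrC F3 // ltW.
Qed.

Lemma vv_hi : virtual_value two b = b.
Proof.
hy; rewrite /virtual_value cdf_two (ltW hab) lexx /= /pmf2 eqxx.
have hx : (0 < 1 - (1 - p + p) + p / 2) && (1 - (1 - p + p) + p / 2 < p).
  by apply/andP; split; lra.
apply: (@derive1_affine _ _ 0 p b 0 hx) => q /andP[q0 qp].
have hq : b * q = h2 q by rewrite /h2 min_l // F1 // ltW.
rewrite addr0 hq; apply: (@ir_eq _ _ h2); first exact: h2_concave.
  exact: h2_major.
move=> g _ gm; rewrite -hq.
have := gm q; rewrite /revenue_curve qv_hi; last by apply/andP; split; lra.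
rewrite mulrC; apply; apply/andP; split; lra.
Qed.

Lemma L2_lb g q : concave01 g ->
  (forall q', 0 <= q' <= 1 -> revenue_curve two q' <= g q') -> p < q < 1 -> L2 q <= g q.
Proof.
hy; move=> gc gm /andP[pq q1].
apply/ler_addgt0Pr => e e0.
have sb := s2_le_b; have sa := s2_le_a.
pose K := (b - s2) + (a - s2).
have K0 : 0 <= K by rewrite /K; lra.
pose d := Order.min (Order.min p (1 - q) / 2) (e / (K + 1)).
have dle1 : d <= Order.min p (1 - q) / 2 by rewrite /d ge_min lexx.
have dle2 : d <= e / (K + 1) by rewrite /d ge_min lexx orbT.
have m1 : Order.min p (1 - q) <= p by rewrite ge_min lexx.
have m2 : Order.min p (1 - q) <= 1 - q by rewrite ge_min lexx orbT.
have m0 : 0 < Order.min p (1 - q) by rewrite lt_min; apply/andP; split; lra.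
have d0 : 0 < d.
  rewrite /d lt_min; apply/andP; split; first lra.
  by apply: divr_gt0 => //; lra.
have dp : d < p by lra.
have dq : d < 1 - q by lra.
have dK : d * K <= e.
  have : d * (K + 1) <= e by rewrite -ler_pdivlMr //; lra.
  nra.
pose x := p - d; pose y := 1 - d; pose t := (1 - d - q) / (1 - p).
have p1 : 0 < 1 - p by lra.
have tE : t * (1 - p) = 1 - d - q by rewrite /t mulfVK //; apply/eqP => h; lra.
have t0 : 0 <= t by rewrite /t divr_ge0 //; lra.
have t1 : t <= 1 by rewrite /t ler_pdivrMr //; lra.
have txy : t * x + (1 - t) * y = q.
  rewrite /x /y.
  have -> : t * (p - d) + (1 - t) * (1 - d) = 1 - d - t * (1 - p) by ring.
  by rewrite tE; ring.
have gx : x * b <= g x.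
  have := gm x; rewrite /revenue_curve qv_hi; last by rewrite /x; apply/andP; split; lra.
  by apply; rewrite /x; apply/andP; split; lra.
have gy : y * a <= g y.
  have := gm y; rewrite /revenue_curve qv_lo; last by rewrite /y; apply/andP; split; lra.
  by apply; rewrite /y; apply/andP; split; lra.
have conc : t * g x + (1 - t) * g y <= g q.
  have := gc x y t; rewrite txy; apply; apply/andP; split; rewrite /x /y; lra.
have ea : a = s2 * (1 - p) + p * b by rewrite s2E; ring.
have eL : L2 q = t * (x * b) + (1 - t) * (y * a) + t * (b - s2) * d + (1 - t) * (a - s2) * d.
  rewrite -{1}txy /L2 /x /y.
  rewrite [in RHS]ea; ring.
have i1 : t * (x * b) <= t * g x by rewrite ler_wpM2l.
have i2 : (1 - t) * (y * a) <= (1 - t) * g y by rewrite ler_wpM2l //; lra.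
have i3 : t * (b - s2) * d <= (b - s2) * d.
  have : 0 <= (b - s2) * d by apply: mulr_ge0; lra.
  move: (b - s2) => u; nra.
have i4 : (1 - t) * (a - s2) * d <= (a - s2) * d.
  have : 0 <= (a - s2) * d by apply: mulr_ge0; lra.
  move: (a - s2) => u; nra.
have : (b - s2) * d + (a - s2) * d = d * K by rewrite /K; ring.
lra.
Qed.

Lemma vv_lo : virtual_value two a = s2.
Proof.
hy; rewrite /virtual_value cdf_two lexx (lt_geF hab) addr0 /= /pmf2 (lt_eqF hab).
have hx : (p < 1 - (1 - p) + (1 - p) / 2) && (1 - (1 - p) + (1 - p) / 2 < 1).
  by apply/andP; split; lra.
apply: (@derive1_affine _ _ p 1 s2 (p * b - s2 * p) hx) => q /andP[pq q1].
have hq : L2 q = h2 q by rewrite /h2 min_r // F2 // ltW.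
rewrite [X in _ = X]hq; apply: (@ir_eq _ _ h2); first exact: h2_concave.
  exact: h2_major.
move=> g gc gm; rewrite -hq.
by apply: L2_lb => //; rewrite pq q1.
Qed.
End Two.
End Dists.
Section Sums.
Variables (R : realType) (n : nat).
Implicit Types (w : 'I_n -> R) (T U : {set 'I_n}).

Lemma sum_sub w T U : T \subset U -> (forall i, i \in U -> 0 <= w i) ->
  \sum_(i in T) w i <= \sum_(i in U) w i.
Proof.
move=> TU w0; rewrite [X in _ <= X](big_setID T) /= (finset.setIidPr TU) lerDl.
by apply: sumr_ge0 => i; rewrite inE => /andP[_ /w0].
Qed.

Lemma sum_sub1 w T U j : T \subset U :\ j -> j \in U -> (forall i, i \in U -> 0 <= w i) ->
  \sum_(i in T) w i <= \sum_(i in U) w i - w j.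
Proof.
move=> TU jU w0; rewrite (big_setD1 _ jU) /= addrC addrK.
by apply: sum_sub => // i; rewrite inE => /andP[_ /w0].
Qed.
End Sums.

Section Mech.
Variables (R : realType) (n : nat) (D : 'I_n -> fdist R) (I : {set {set 'I_n}})
  (tb : {set {set 'I_n}} -> {set 'I_n}).
Hypothesis htb : tie_breaking_rule tb.

Lemma winners_eq S b T0 : T0 \in candidates D I S b ->
  (forall T, T \in candidates D I S b -> T != T0 -> vv_weight D b T < vv_weight D b T0) ->
  winners D I tb S b = T0.
Proof.
move=> c0 opt; rewrite /winners.
have -> : optimal_sets D I S b = [set T0]%SET.
  apply/setP => T; rewrite finset.in_set1 inE.
  case: eqVneq => [->|ne]; rewrite ?c0 /=.
    apply/forall_inP => T' cT'; case: (eqVneq T' T0) => [->//|].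
    by move/(opt _ cT')/ltW.
  apply/negbTE; rewrite negb_and; case cT: (T \in candidates D I S b) => //=.
  apply/forall_inPn; exists T0 => //; rewrite -ltNge; exact: opt.
have ne : [set T0]%SET != finset.set0 by apply/finset.set0Pn; exists T0; rewrite finset.in_set1.
by have /finset.set1P := htb _ ne.
Qed.

Lemma crit_eq S b i z0 : z0 \in fd_supp (D i) -> i \in winners D I tb S (upd b i z0) ->
  (forall z, z \in fd_supp (D i) -> z0 <= z) -> critical_bid D I tb S b i = z0.
Proof.
move=> z0s w0 lb; rewrite /critical_bid.
apply/le_anti/andP; split.
  by apply: ge_inf; [exists z0 => z [/lb]|split].
by apply: lb_le_inf; [exists z0|move=> z [/lb]].
Qed.

Lemma upd_id (b : 'I_n -> R) i : upd b i (b i) = b.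
Proof. by apply/funext => j; rewrite /upd; case: eqP => [->|]. Qed.

Lemma expect_pm l h (b : 'I_n -> R) :
  (forall i, i \in l -> fd_supp (D i) = [:: b i] /\ fd_pmf (D i) (b i) = 1) ->
  expect D l h b = h b.
Proof.
elim: l => //= i l IH hl.
have [e1 e2] := hl i (mem_head _ _).
rewrite e1 big_seq1 e2 mul1r upd_id IH // => j jl; apply: hl; by rewrite inE jl orbT.
Qed.

Hypothesis dc : downward_closed I.
Variables (A B : {set 'I_n}) (N a alpha : R).
Hypotheses (hA : A \in I) (hB : B \in I)
  (key : forall i y, i \in A :\: B -> y \in B :\: A -> y |: (A :\ i) \notin I)
  (i0 : exists i, i \in A :\: B)
  (hN : (#|B :\: A|)%:R < N) (halpha : 0 < alpha).

Lemma full_opt (b : 'I_n -> R) (K : {set 'I_n}) :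
  K \subset A :\: B -> (forall j k, j \in K -> k \in K -> j = k) ->
  (forall i, i \in A -> i \notin K -> phi D i (b i) = N) ->
  (forall i, i \in K -> 0 < phi D i (b i)) ->
  (forall i, i \in B :\: A -> phi D i (b i) = 1) ->
  remaining D [set: 'I_n] b = A :|: B ->
  winners D I tb [set: 'I_n] b = A.
Proof.
move=> KA Kuniq wA wK wB rem.
have N0 : 0 < N by apply: le_lt_trans hN.
have w0 : forall i, i \in A :|: B -> 0 <= phi D i (b i).
  move=> i; rewrite !inE; case iA: (i \in A) => /=.
    by case iK: (i \in K); [rewrite ltW ?wK|rewrite wA ?iK ?ltW].
  by move=> iB; rewrite wB ?inE ?iA ?iB.
apply: winners_eq.
  by rewrite inE hA rem finset.subsetUl.
move=> T; rewrite inE rem => /andP[TI TAB] TA.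
rewrite /vv_weight.
have [i1 i1AB] := i0.
case: (boolP (A \subset T)) => sAT.
  exfalso.
  have [y yT yA] : exists2 y, y \in T & y \notin A.
    apply/exists_inP; rewrite -negb_forall_in; apply: contra TA => /forall_inP h.
    by rewrite finset.eqEsubset sAT andbT; by apply/fintype.subsetP => y /h.
  have yBA : y \in B :\: A.
    by have := fintype.subsetP TAB y yT; rewrite !inE (negbTE yA) /= => ->.
  have : y |: (A :\ i1) \in I.
    apply: (dc _ _ TI).
    apply/fintype.subsetP => k; rewrite !inE => /orP[/eqP->//|/andP[_ kA]].
    exact: fintype.subsetP sAT k kA.
  by rewrite (negbTE (key i1 y i1AB yBA)).
case: (boolP [exists k in A, (k \notin T) && (k \notin K)]).
  case/exists_inP => j jA /andP[jT jK].
  have jAB : j \in A :|: B by rewrite inE jA.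
  apply: (le_lt_trans (@sum_sub1 _ _ _ T (A :|: B) j _ jAB w0)).
    apply/fintype.subsetP => t tT; rewrite finset.in_setD1 (fintype.subsetP TAB t tT) andbT.
    by apply: contraNneq jT => <-.
  rewrite wA // (big_setID A) /= (finset.setIidPr (finset.subsetUl A B)).
  have -> : (A :|: B) :\: A = B :\: A by rewrite finset.setDUl finset.setDv finset.set0U.
  rewrite [\sum_(i in B :\: A) _](eq_bigr (fun=> 1)); last by move=> i; exact: wB.
  rewrite sumr_const.
  by rewrite -addrA -[X in _ < X]addr0 ltrD2l subr_lt0.
rewrite negb_exists_in => /forall_inP allK.
have [j jA jT] : exists2 j, j \in A & j \notin T.
  by apply/exists_inP; rewrite -negb_forall_in; apply: contra sAT => /forall_inP h;
     apply/fintype.subsetP => k /h.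
have jK : j \in K by have := allK j jA; rewrite negb_and jT /= negbK.
have sAjT : A :\ j \subset T.
  apply/fintype.subsetP => k; rewrite !inE => /andP[kj kA].
  apply: contraR kj => kT; have := allK k kA; rewrite negb_and kT /= negbK => kK.
  by rewrite (Kuniq _ _ kK jK).
have sTAj : T \subset A :\ j.
  apply/fintype.subsetP => t tT; rewrite !inE.
  have -> : t != j by apply: contraNneq jT => <-.
  case tA: (t \in A) => //=.
  have tBA : t \in B :\: A by have := fintype.subsetP TAB t tT; rewrite !inE tA /= => ->.
  have jAB : j \in A :\: B by exact: fintype.subsetP KA j jK.
  have : t |: (A :\ j) \in I.
    apply: (dc _ _ TI).
    by apply/fintype.subsetP => k; rewrite !inE => /orP[/eqP->//|]; rewrite -finset.in_setD1 => /(fintype.subsetP sAjT).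
  by rewrite (negbTE (key j t jAB tBA)).
apply: (le_lt_trans (@sum_sub1 _ _ _ T A j sTAj jA _)).
  by move=> i iA; apply: w0; rewrite inE iA.
by rewrite ltrBlDr ltrDl wK.
Qed.

Lemma G_opt (b : 'I_n -> R) : (forall i, i \in B -> 0 < phi D i (b i)) ->
  winners D I tb B b = B.
Proof.
move=> wB.
have rem : remaining D B b = B.
  by apply/setP => i; rewrite inE; case iB: (i \in B) => //=; rewrite ltW ?wB.
apply: winners_eq; first by rewrite inE hB rem fintype.subxx.
move=> T; rewrite inE rem => /andP[TI TB] TnB.
have [j jB jT] : exists2 j, j \in B & j \notin T.
  apply/exists_inP; rewrite -negb_forall_in; apply: contra TnB => /forall_inP h.
  by rewrite finset.eqEsubset TB; apply/fintype.subsetP => y /h.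
apply: (le_lt_trans (@sum_sub1 _ _ _ T B j _ jB _)).
- apply/fintype.subsetP => t tT; rewrite finset.in_setD1 (fintype.subsetP TB t tT) andbT.
  by apply: contraNneq jT => <-.
- by move=> i /wB /ltW.
by rewrite ltrBlDr ltrDl wB.
Qed.

Variables (ad : R).
Hypotheses (ha0 : 0 <= ad) (haN : ad < N)
  (hrev : ad * (#|A :\: B|)%:R < (#|B :\: A|)%:R).
Hypothesis dAB : forall i, i \in A -> i \in B ->
  [/\ fd_supp (D i) = [:: N], fd_pmf (D i) N = 1 & phi D i N = N].
Hypothesis dA : forall i, i \in A -> i \notin B ->
  [/\ fd_supp (D i) = [:: ad; N], phi D i N = N & phi D i ad = alpha].
Hypothesis dB : forall i, i \notin A -> i \in B ->
  [/\ fd_supp (D i) = [:: 1], fd_pmf (D i) 1 = 1 & phi D i 1 = 1].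
Hypothesis dO : forall i, i \notin A -> i \notin B -> phi D i 0 < 0.

Definition beta : 'I_n -> R := fun i => if i \in A then N else if i \in B then 1 else 0.

Lemma phiA i : i \in A -> phi D i (beta i) = N.
Proof.
move=> iA; rewrite /beta iA; case iB: (i \in B).
  by have [] := dAB _ iA iB.
by have [] := dA _ iA (negbT iB).
Qed.

Lemma phiB i : i \in B :\: A -> phi D i (beta i) = 1.
Proof.
rewrite inE => /andP[iA iB]; rewrite /beta (negbTE iA) iB.
by have [] := dB _ iA iB.
Qed.

Lemma rem_gen (b : 'I_n -> R) :
  (forall i, i \in A :|: B -> 0 <= phi D i (b i)) ->
  (forall i, i \notin A :|: B -> phi D i (b i) < 0) ->
  remaining D [set: 'I_n] b = A :|: B.
Proof.
move=> h1 h2; apply/setP => i; rewrite inE finset.in_setT /=.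
case iAB: (i \in A :|: B); first by rewrite h1.
by apply/negbTE; rewrite -ltNge h2 ?iAB.
Qed.

Lemma N0 : 0 < N. Proof. exact: le_lt_trans hN. Qed.

Lemma beta_out i : i \notin A :|: B -> phi D i (beta i) < 0.
Proof.
rewrite inE negb_or => /andP[iA iB]; rewrite /beta (negbTE iA) (negbTE iB).
exact: dO.
Qed.

Lemma win_full : winners D I tb [set: 'I_n] beta = A.
Proof.
apply: (@full_opt _ finset.set0).
- exact: finset.sub0set.
- by move=> j k; rewrite finset.in_set0.
- by move=> i iA _; rewrite phiA.
- by move=> i; rewrite finset.in_set0.
- exact: phiB.
apply: rem_gen; last exact: beta_out.
move=> i; rewrite inE; case iA: (i \in A) => /=.
  by move=> _; rewrite phiA // ltW // N0.
by move=> iB; rewrite phiB // inE iA iB.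
Qed.

Lemma win_low i : i \in A :\: B -> winners D I tb [set: 'I_n] (upd beta i ad) = A.
Proof.
move=> iAB; have := iAB; rewrite inE => /andP[iB iA].
apply: (@full_opt _ [set i]%SET).
- by rewrite finset.sub1set.
- by move=> j k /finset.set1P -> /finset.set1P ->.
- move=> j jA; rewrite finset.in_set1 /upd => /negbTE ->; exact: phiA.
- by move=> j /finset.set1P ->; rewrite /upd eqxx; have [_ _ ->] := dA _ iA iB.
- move=> j jBA; rewrite /upd; case: eqP => [ji|_]; last exact: phiB.
  by move: jBA; rewrite ji inE iA.
apply: rem_gen => j; rewrite /upd; case: eqP => [->|_].
- by have [_ _ ->] := dA _ iA iB; rewrite ltW.
- rewrite inE; case jA: (j \in A) => /=.
    by move=> _; rewrite phiA // ltW // N0.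
  by move=> jB; rewrite phiB // inE jA jB.
- by rewrite inE iA.
- exact: beta_out.
Qed.

Lemma rev_full : Rev D I tb [set: 'I_n] beta = \sum_(j in A) (if j \in B then N else ad).
Proof.
rewrite /Rev win_full; apply: eq_bigr => j jA; case jB: (j \in B).
  have [s1 _ _] := dAB _ jA jB.
  apply: crit_eq; first by rewrite s1 mem_head.
    have bj : beta j = N by rewrite /beta jA.
    by rewrite -bj upd_id win_full.
  by move=> z; rewrite s1 inE => /eqP ->.
have [s1 _ _] := dA _ jA (negbT jB).
apply: crit_eq; first by rewrite s1 mem_head.
  by rewrite win_low // inE jB jA.
by move=> z; rewrite s1 !inE => /orP[/eqP->|/eqP->] //; rewrite ltW.
Qed.

Lemma posB i : i \in B -> 0 < phi D i (beta i).
Proof.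
move=> iB; case iA: (i \in A); first by rewrite phiA // N0.
by rewrite phiB // inE iA iB.
Qed.

Lemma rev_G : Rev D I tb B beta = \sum_(j in B) beta j.
Proof.
rewrite /Rev G_opt; last exact: posB.
apply: eq_bigr => j jB.
have s1 : fd_supp (D j) = [:: beta j].
  rewrite /beta; case jA: (j \in A); first by have [] := dAB _ jA jB.
  by rewrite jB; have [] := dB _ (negbT jA) jB.
apply: crit_eq; first by rewrite s1 mem_head.
  by rewrite upd_id G_opt //; exact: posB.
by move=> z; rewrite s1 inE => /eqP ->.
Qed.

Lemma main_ineq : Rev D I tb [set: 'I_n] beta < Rev D I tb B beta.
Proof.
rewrite rev_full rev_G (big_setID B) [X in _ < X](big_setID A) /=.
rewrite (finset.setIC B A).
have -> : \sum_(i in A :&: B) (if i \in B then N else ad) = \sum_(i in A :&: B) beta i.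
  by apply: eq_bigr => i; rewrite inE => /andP[iA iB]; rewrite iB /beta iA.
rewrite ltrD2l.
rewrite (eq_bigr (fun=> ad)); last by move=> i; rewrite inE => /andP[/negbTE -> _].
rewrite [X in _ < X](eq_bigr (fun=> 1)); last first.
  by move=> i; rewrite inE => /andP[iA iB]; rewrite /beta (negbTE iA) iB.
by rewrite !sumr_const -mulr_natr.
Qed.
End Mech.
Local Open Scope nat_scope.
Section Pair.
Variables (n : nat) (I : {set {set 'I_n}}).
Hypothesis dc : downward_closed I.

Definition viol (A B : {set 'I_n}) :=
  forall x, x \in A :\: B -> ([set x]%SET :|: B) \notin I.

Lemma improve A B i y : viol A B -> i \in A :\: B -> y \in B :\: A ->
  y |: (A :\ i) \in I ->
  [/\ #|A| = #|y |: (A :\ i)|, viol (y |: (A :\ i)) B &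
      #|B :\: (y |: (A :\ i))| < #|B :\: A|].
Proof.
move=> vAB; rewrite !inE => /andP[iB iA] /andP[yA yB] DI; split.
- rewrite finset.cardsU1 (finset.cardsD1 i A) iA !inE negb_and yA orbT.
  by rewrite add1n.
- move=> x; rewrite !inE => /andP[xB /orP[/eqP xy|/andP[_ xA]]].
    by rewrite xy yB in xB.
  by apply: vAB; rewrite !inE xB xA.
apply: fintype.proper_card; apply/fintype.properP; split.
  apply/fintype.subsetP => x; rewrite !inE negb_or => /andP[/andP[_ xD] xB].
  rewrite xB andbT; apply: contra xD => xA; rewrite xA andbT.
  by apply: contraNneq iB => <-.
by exists y; rewrite !inE ?yA ?yB // eqxx.
Qed.

Lemma get_pair_k k A B : #|B :\: A| <= k -> A \in I -> B \in I -> #|B| < #|A| -> viol A B ->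
  exists A B, [/\ A \in I, B \in I, #|B| < #|A|, viol A B &
    (forall i y, i \in A :\: B -> y \in B :\: A -> y |: (A :\ i) \notin I)].
Proof.
elim: k A B => [|k IH] A B hk hA hB hlt hv;
  case: (boolP [forall i in A :\: B, forall y in B :\: A, y |: (A :\ i) \notin I]).
- move/forall_inP => h; exists A, B; split => // i y iAB yBA.
  by have /forall_inP := h i iAB; apply.
- rewrite negb_forall_in => /exists_inP [i iAB]; rewrite negb_forall_in => /exists_inP [y yBA].
  rewrite negbK => DI.
  have [_ _ c] := improve _ _ _ _ hv iAB yBA DI.
  by have := leq_trans c hk.
- move/forall_inP => h; exists A, B; split => // i y iAB yBA.
  by have /forall_inP := h i iAB; apply.
rewrite negb_forall_in => /exists_inP [i iAB]; rewrite negb_forall_in => /exists_inP [y yBA].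
rewrite negbK => DI.
have [c1 v2 c3] := improve _ _ _ _ hv iAB yBA DI.
apply: (IH _ _ _ DI hB) => //; last by rewrite -c1.
by rewrite -ltnS (leq_trans c3).
Qed.
End Pair.
Local Open Scope ring_scope.

Theorem mainTheorem2 (R : realType) (n : nat) (I : {set {set 'I_n}})
    (tb : {set {set 'I_n}} -> {set 'I_n}) :
  finset.set0 \in I -> downward_closed I -> ~ is_matroid I ->
  tie_breaking_rule tb ->
  exists (D : 'I_n -> fdist R) (G : {set 'I_n}) (bR : 'I_n -> R),
    [/\ G != finset.set0,
        (forall i, i \in ~: G -> bR i \in fd_supp (D i)) &
        expect D (enum G) (Rev D I tb [set: 'I_n]) bR
          < expect D (enum G) (Rev D I tb G) bR].
Proof.
move=> I0 dc nm htb.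
have nex : ~ exchange_axiom I by move=> ex; apply: nm; split.
have [A0 [B0 [hA0 [hB0 [hlt0 hv0]]]]] : exists A B, [/\ A \in I, B \in I,
    (#|B| < #|A|)%N & @viol n I A B].
  apply: Classical_Prop.NNPP => H; apply: nex => A B hA hB hlt.
  apply: Classical_Prop.NNPP => H2; apply: H; exists A, B; split => //.
  move=> x xAB; apply/negP => xI; apply: H2; by exists x.
have [A [B [hA hB hlt hv key]]] := @get_pair_k _ _ _ _ _ (leqnn _) hA0 hB0 hlt0 hv0.
have [i0 i0A i0B] : exists2 i, i \in A & i \notin B.
  apply/exists_inP; rewrite -negb_forall_in; apply: contraL hlt => /forall_inP h.
  rewrite -leqNgt; apply: fintype.subset_leq_card; exact/fintype.subsetP.
have i0AB : i0 \in A :\: B by rewrite inE i0A i0B.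
have [y0 y0B y0A] : exists2 y, y \in B & y \notin A.
  apply/exists_inP; rewrite -negb_forall_in; apply/negP => /forall_inP h.
  have := hv i0 i0AB; apply/negP/negPn; apply: (dc _ _ hA).
  apply/fintype.subsetP => x; rewrite !inE => /orP[/eqP->//|/h //].
pose N : R := n.+1%:R.
have hN1 : 1 <= N by rewrite /N ler1n.
have hN0 : 0 <= N by apply: le_trans hN1.
have cBA : (#|B :\: A| <= n)%N by rewrite -[X in (_ <= X)%N]card_ord max_card.
have cAB : (#|A :\: B| <= n)%N by rewrite -[X in (_ <= X)%N]card_ord max_card.
have cBA1 : (0 < #|B :\: A|)%N by apply/card_gt0P; exists y0; rewrite inE y0A y0B.
have hN : (#|B :\: A|)%:R < N by rewrite /N ltr_nat ltnS.
have NE : N = n%:R + 1 by rewrite /N -natr1.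
pose ad : R := (2 * N)^-1.
have adE : ad * (2 * N) = 1 by rewrite /ad mulVf //; apply/eqP => h; lra.
have had0 : 0 < ad by rewrite /ad invr_gt0; lra.
have hadN : ad < N by nra.
have hrev : ad * (#|A :\: B|)%:R < (#|B :\: A|)%:R.
  have k1 : (#|A :\: B|)%:R <= n%:R :> R by rewrite ler_nat.
  have k2 : 1 <= (#|B :\: A|)%:R :> R by rewrite ler1n.
  have k3 : 0 <= n%:R :> R by [].
  nra.
pose p : R := ad / (2 * N).
have pE : p * (2 * N) = ad by rewrite /p mulfVK //; apply/eqP => h; lra.
have hp0 : 0 < p by rewrite /p divr_gt0 //; lra.
have hp1 : p < 1 by nra.
have h12a : 0 < 1 / 2 :> R by lra.
have h12b : 1 / 2 < 1 :> R by lra.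
pose dAB := @pm R N hN0.
pose dA := @two R ad N p (ltW had0) hadN hp0 hp1.
pose dB := @pm R 1 ler01.
pose dO := @two R 0 1 (1 / 2) (lexx 0) ltr01 h12a h12b.
pose D := fun i : 'I_n => if i \in A then (if i \in B then dAB else dA) else (if i \in B then dB else dO).
have alpha0 : 0 < s2 R ad N p.
  have := @s2E R ad N p (ltW had0) hadN hp0 hp1; nra.
have sO : s2 R 0 1 (1 / 2) < 0.
  have := @s2E R 0 1 (1 / 2) (lexx 0) ltr01 h12a h12b; lra.
exists D, B, (beta R n A B N); split.
- by apply/finset.set0Pn; exists y0.
- move=> i; rewrite inE => iB; rewrite /beta /D (negbTE iB).
  by case: (i \in A); rewrite /= !inE eqxx ?orbT.
have hE : forall h, expect D (enum B) h (beta R n A B N) = h (beta R n A B N).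
  move=> h; apply: expect_pm => i; rewrite mem_enum => iB; rewrite /D /beta iB.
  by case: (i \in A).
rewrite !hE.
apply: (@main_ineq R n D I tb htb dc A B N (s2 R ad N p) hA hB key (ex_intro _ i0 i0AB)
   hN alpha0 ad hadN hrev).
- move=> i iA iB; rewrite /phi /D iA iB; split => //; exact: vv_pm.
- move=> i iA iB; rewrite /phi /D iA (negbTE iB); split => //; [exact: vv_hi|exact: vv_lo].
- move=> i iA iB; rewrite /phi /D (negbTE iA) iB; split => //; exact: vv_pm.
- by move=> i iA iB; rewrite /phi /D (negbTE iA) (negbTE iB) vv_lo.
Qed.
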